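(* If two topological coarse spaces $X$ and $Y$ are coarsely equivalent, then $\mathrm{Ends}(X)$ is homeomorphic to $\mathrm{Ends}(Y)$.
   Context: For a family $\mathcal U$ of subsets of $X$ and $A\subset X$, $st(A,\mathcal U)$ is the union of all $U\in\mathcal U$ meeting $A$; $st(\mathcal U,\mathcal V)=\{st(U,\mathcal V):U\in\mathcal U\}$. A large scale space is a set with a family of covers (uniformly bounded covers) closed under $st(\cdot,\cdot)$ and under passing to refinements; bounded sets are subsets of elements of uniformly bounded covers. A topological coarse space is a large scale space with a topology such that some uniformly bounded cover consists of open sets, and the union of two bounded sets is bounded. $A\subset X$ is coarsely clopen if $st(A,\mathcal U)\cap st(X\setminus A,\mathcal U)$ is bounded for every uniformly bounded $\mathcal U$. An end is a family of unbounded open coarsely clopen subsets of $X$, maximal among such families closed under finite intersections; $\mathrm{Ends}(X)$ carries the topology in which, for open coarsely clopen $U$, the sets $\{E: U\in E\}$ form a basis (the subspace topology from $X\cup\mathrm{Ends}(X)$, where $Y$ is open iff $Y\cap X$ is open and each end $E\in Y$ has an open coarsely clopen $U\in E$ with $U\cup\{E':U\in E'\}\subset Y$). A map $f:X\to Y$ is coarse if preimages of bounded sets are bounded and large scale continuous if images of uniformly bounded covers are uniformly bounded; $f,g:X\to Y$ are close if there is a uniformly bounded cover $\mathcal U$ of $Y$ with $f(x)\in st(g(x),\mathcal U)$ for all $x$. $X,Y$ are coarsely equivalent if there are coarse large scale continuous $f:X\to Y$, $g:Y\to X$ with $g\circ f$ close to $\mathrm{id}_X$ and $f\circ g$ close to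 $\mathrm{id}_Y$. *)

(* Defs.v *)
Set Implicit Arguments.

Definition pset (X : Type) := X -> Prop.

Section Defs.
Variable X : Type.

Definition family := pset (pset X).

Definition is_cover (U : family) : Prop :=
  forall x : X, exists A, U A /\ A x.

Definition st (A : pset X) (U : family) : pset X :=
  fun x => exists B, U B /\ (exists a, A a /\ B a) /\ B x.

Definition st_fam (U V : family) : family :=
  fun C => exists A, U A /\ C = st A V.

Definition refines (U V : family) : Prop :=
  forall A, U A -> exists B, V B /\ (forall x, A x -> B x).

(* a large scale structure: a family of covers (the uniformly bounded covers)
   closed under st(.,.) and under passing to refinements *)
Definition large_scale (LS : pset family) : Prop :=
  (forall U, LS U -> is_cover U) /\
  (forall U V, LS U -> LS V -> LS (st_fam U V)) /\
  (forall U V, LS V -> is_cover U -> refines U V -> LS U).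

Definition bounded (LS : pset family) (B : pset X) : Prop :=
  exists U, LS U /\ exists A, U A /\ (forall x, B x -> A x).

Definition unif_bounded_fam (LS : pset family) (U : family) : Prop :=
  exists V, LS V /\ refines U V.

Definition is_topology (op : pset X -> Prop) : Prop :=
  op (fun _ => False) /\ op (fun _ => True) /\
  (forall A B, op A -> op B -> op (fun x => A x /\ B x)) /\
  (forall F : family, (forall A, F A -> op A) ->
     op (fun x => exists A, F A /\ A x)).

Definition top_coarse_space (LS : pset family) (op : pset X -> Prop) : Prop :=
  large_scale LS /\ is_topology op /\
  (exists U, LS U /\ forall A, U A -> op A) /\
  (forall A B, bounded LS A -> bounded LS B -> bounded LS (fun x => A x \/ B x)).

Definition coarsely_clopen (LS : pset family) (A : pset X) : Prop :=
  forall U, LS U ->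
    bounded LS (fun x => st A U x /\ st (fun y => ~ A y) U x).

Definition end_candidate (LS : pset family) (op : pset X -> Prop) (A : pset X) :=
  ~ bounded LS A /\ op A /\ coarsely_clopen LS A.

Definition end_prefamily (LS : pset family) (op : pset X -> Prop) (E : family) :=
  (forall A, E A -> end_candidate LS op A) /\
  (forall A B, E A -> E B -> E (fun x => A x /\ B x)).

Definition is_end (LS : pset family) (op : pset X -> Prop) (E : family) :=
  end_prefamily LS op E /\
  (forall F, end_prefamily LS op F -> (forall A, E A -> F A) ->
     forall A, F A -> E A).

Definition Ends (LS : pset family) (op : pset X -> Prop) : Type :=
  { E : family | is_end LS op E }.

Definition ends_open (LS : pset family) (op : pset X -> Prop)
  (W : pset (Ends LS op)) : Prop :=
  forall E, W E -> exists U, op U /\ coarsely_clopen LS U /\ proj1_sig E U /\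
     (forall E' : Ends LS op, proj1_sig E' U -> W E').

End Defs.

Definition coarse_map (X Y : Type) (LSX : pset (family X)) (LSY : pset (family Y))
  (f : X -> Y) : Prop :=
  forall B, bounded LSY B -> bounded LSX (fun x => B (f x)).

Definition image_fam (X Y : Type) (f : X -> Y) (U : family X) : family Y :=
  fun C => exists A, U A /\ C = (fun y => exists x, A x /\ f x = y).

Definition ls_continuous (X Y : Type) (LSX : pset (family X)) (LSY : pset (family Y))
  (f : X -> Y) : Prop :=
  forall U, LSX U -> unif_bounded_fam LSY (image_fam f U).

Definition close_maps (X Y : Type) (LSY : pset (family Y)) (f g : X -> Y) : Prop :=
  exists U, LSY U /\ forall x, st (fun y => y = g x) U (f x).

Definition coarsely_equivalent (X Y : Type) (LSX : pset (family X))
  (LSY : pset (family Y)) : Prop :=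
  exists (f : X -> Y) (g : Y -> X),
    coarse_map LSX LSY f /\ ls_continuous LSX LSY f /\
    coarse_map LSY LSX g /\ ls_continuous LSY LSX g /\
    close_maps LSX (fun x => g (f x)) (fun x => x) /\
    close_maps LSY (fun y => f (g y)) (fun y => y).

Definition continuous_wrt (S T : Type) (opS : pset S -> Prop) (opT : pset T -> Prop)
  (h : S -> T) : Prop :=
  forall W, opT W -> opS (fun s => W (h s)).

Definition homeomorphic (S T : Type) (opS : pset S -> Prop) (opT : pset T -> Prop)
  : Prop :=
  exists (h : S -> T) (k : T -> S),
    (forall s, k (h s) = s) /\ (forall t, h (k t) = t) /\
    continuous_wrt opS opT h /\ continuous_wrt opT opS k.

(* Main.v *)
Require Import Defs.
From Stdlib Require Import Classical FunctionalExtensionality PropExtensionality ProofIrrelevance.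
Set Implicit Arguments.

Section Space.
Variable X : Type.
Variable LS : pset (family X).
Variable op : pset X -> Prop.
Hypothesis hX : top_coarse_space LS op.

Lemma st_intro (A : pset X) U B a x : U B -> A a -> B a -> B x -> st A U x.
Proof. intros. exists B. split; [auto|split; [exists a; auto|auto]]. Qed.

Lemma bnd_sub (A B : pset X) : bounded LS A -> (forall x, B x -> A x) -> bounded LS B.
Proof. intros [U [HU [C [HC HA]]]] H. exists U; split; auto. exists C; split; auto. Qed.

Lemma bnd_union (A B : pset X) : bounded LS A -> bounded LS B -> bounded LS (fun x => A x \/ B x).
Proof. destruct hX as [_ [_ [_ H]]]. apply H. Qed.

Lemma ls_cover U : LS U -> is_cover U.
Proof. destruct hX as [[H _] _]. apply H. Qed.

Lemma ls_st U V : LS U -> LS V -> LS (st_fam U V).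
Proof. destruct hX as [[_ [H _]] _]. apply H. Qed.

Lemma st_sup (A : pset X) U : LS U -> forall x, A x -> st A U x.
Proof. intros HU x Ax. destruct (ls_cover HU x) as [B [HB Bx]]. eapply st_intro; eauto. Qed.

Lemma op_ext (A B : pset X) : op A -> (forall x, A x <-> B x) -> op B.
Proof. intros H E. replace B with A; auto. apply functional_extensionality; intro x; apply propositional_extensionality; auto. Qed.

Lemma op_inter (A B : pset X) : op A -> op B -> op (fun x => A x /\ B x).
Proof. destruct hX as [_ [[_ [_ [H _]]] _]]. apply H. Qed.

Lemma cc_inter (A B : pset X) : coarsely_clopen LS A -> coarsely_clopen LS B ->
  coarsely_clopen LS (fun x => A x /\ B x).
Proof.
  intros HA HB U HU. eapply bnd_sub. apply bnd_union; [apply (HA U HU) | apply (HB U HU)].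
  intros x [[C [HC [[a [[Aa Ba] Ca]] Cx]]] [D [HD [[b [nb Db]] Dx]]]].
  apply not_and_or in nb. destruct nb as [nb|nb].
  - left. split; [apply st_intro with (B:=C) (a:=a) | apply st_intro with (B:=D) (a:=b)]; auto.
  - right. split; [apply st_intro with (B:=C) (a:=a) | apply st_intro with (B:=D) (a:=b)]; auto.
Qed.

Lemma thick_open (U0 : family X) (C : pset X) : (forall B, U0 B -> op B) -> op (st C U0).
Proof.
  intros H. destruct hX as [_ [[_ [_ [_ Hu]]] _]].
  eapply op_ext. apply (Hu (fun B => U0 B /\ exists a, C a /\ B a)).
  intros A [HA _]. auto.
  intros x; split.
  - intros [B [[HB Ha] Bx]]. exists B; auto.
  - intros [B [HB [Ha Bx]]]. exists B; auto.
Qed.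

Lemma thick_cc (U0 : family X) (C : pset X) : LS U0 -> coarsely_clopen LS C ->
  coarsely_clopen LS (st C U0).
Proof.
  intros H0 HC U HU. eapply bnd_sub. apply (HC (st_fam U0 U) (ls_st H0 HU)).
  intros x [[B' [HB' [[y [[B [HB [[c [Cc Bc]] By]]] B'y]] B'x]]] [D [HD [[z [nz Dz]] Dx]]]].
  split.
  - apply st_intro with (B := st B U) (a := c).
    + exists B; auto.
    + auto.
    + apply st_sup; auto.
    + apply st_intro with (B:=B') (a:=y); auto.
  - destruct (ls_cover H0 z) as [B2 [HB2 B2z]].
    apply st_intro with (B := st B2 U) (a := z).
    + exists B2; auto.
    + intros Cz. apply nz. apply st_intro with (B:=B2) (a:=z); auto.
    + apply st_intro with (B:=D) (a:=z); auto.
    + apply st_intro with (B:=D) (a:=z); auto.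
Qed.

Lemma st_diff (U : family X) (C : pset X) : LS U -> coarsely_clopen LS C ->
  bounded LS (fun x => st C U x /\ ~ C x).
Proof.
  intros HU HC. eapply bnd_sub. apply (HC U HU).
  intros x [Hs nC]. split; auto. apply st_sup; auto.
Qed.

Lemma end_E1 (E : family X) (A : pset X) : is_end LS op E -> end_candidate LS op A ->
  (forall B, E B -> ~ bounded LS (fun x => A x /\ B x)) -> E A.
Proof.
  intros [[Hc Hi] Hmax] HA Hb.
  pose (Bs := fun B : pset X => E B \/ forall x, B x).
  assert (Bu : forall B, Bs B -> ~ bounded LS (fun x => A x /\ B x)).
  { intros B [HB|HB]; auto. intros Hbd. apply (proj1 HA). eapply bnd_sub; eauto. simpl; auto. }
  assert (Bi : forall B1 B2, Bs B1 -> Bs B2 -> exists B, Bs B /\ forall x, B x -> B1 x /\ B2 x).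
  { intros B1 B2 [H1|H1] [H2|H2].
    - exists (fun x => B1 x /\ B2 x). split; auto. left; auto.
    - exists B1; split; [left; auto| auto].
    - exists B2; split; [left; auto| auto].
    - exists B1; split; [right; auto| auto]. }
  apply (Hmax (fun C => end_candidate LS op C /\ exists B, Bs B /\ forall x, A x /\ B x -> C x)).
  - split.
    + intros C [H _]; auto.
    + intros C1 C2 [[u1 [o1 c1]] [B1 [HB1 S1]]] [[u2 [o2 c2]] [B2 [HB2 S2]]].
      destruct (Bi B1 B2 HB1 HB2) as [B [HB SB]].
      split; [split; [|split]|].
      * intros Hbd. apply (Bu B HB). eapply bnd_sub; eauto.
        intros x [Ax Bx]. destruct (SB x Bx). split; auto.
      * apply op_inter; auto.
      * apply cc_inter; auto.
      * exists B; split; auto. intros x [Ax Bx]. destruct (SB x Bx). split; auto.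
  - intros C HC. split; auto. exists C. split; [left; auto|]. intros x [_ Cx]; auto.
  - split; auto. exists (fun _ => True). split; [right; auto|]. intros x [Ax _]; auto.
Qed.

End Space.
Arguments bnd_sub {X LS A B}.
Arguments st_sup {X LS op} hX {A U}.
Arguments thick_open {X LS op} hX {U0 C}.
Arguments thick_cc {X LS op} hX {U0 C}.
Arguments st_diff {X LS op} hX {U C}.
Arguments op_inter {X LS op} hX {A B}.
Arguments cc_inter {X LS op} hX {A B}.
Arguments end_E1 {X LS op} hX {E A}.

Lemma pre_cc (X Y : Type) (LSX : pset (family X)) (opX : pset X -> Prop)
  (LSY : pset (family Y)) (opY : pset Y -> Prop)
  (hX : top_coarse_space LSX opX) (hY : top_coarse_space LSY opY) (f : X -> Y) :
  ls_continuous LSX LSY f -> coarse_map LSX LSY f ->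
  forall V, coarsely_clopen LSY V -> coarsely_clopen LSX (fun x => V (f x)).
Proof.
  intros fl fc V HV U HU. destruct (fl U HU) as [V' [HV' Href]].
  eapply bnd_sub. apply (fc _ (HV V' HV')).
  intros x [[B1 [HB1 [[a [Va B1a]] B1x]]] [B2 [HB2 [[b [nb B2b]] B2x]]]].
  destruct (Href (fun y => exists x, B1 x /\ f x = y)) as [D1 [HD1 SD1]].
  { exists B1; auto. }
  destruct (Href (fun y => exists x, B2 x /\ f x = y)) as [D2 [HD2 SD2]].
  { exists B2; auto. }
  split.
  - apply st_intro with (B:=D1) (a:=f a); auto; apply SD1; eauto.
  - apply st_intro with (B:=D2) (a:=f b); auto; apply SD2; eauto.
Qed.

Section Transport.
Variables (X Y : Type) (LSX : pset (family X)) (opX : pset X -> Prop)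
  (LSY : pset (family Y)) (opY : pset Y -> Prop).
Hypothesis hX : top_coarse_space LSX opX.
Hypothesis hY : top_coarse_space LSY opY.
Variables (f : X -> Y) (g : Y -> X).
Hypotheses (fc : coarse_map LSX LSY f) (fl : ls_continuous LSX LSY f)
  (gc : coarse_map LSY LSX g) (gl : ls_continuous LSY LSX g)
  (cgf : close_maps LSX (fun x => g (f x)) (fun x => x))
  (cfg : close_maps LSY (fun y => f (g y)) (fun y => y)).

Lemma unb_pre V : end_candidate LSY opY V -> ~ bounded LSX (fun x => V (f x)).
Proof.
  intros [Vu [_ Vcc]] Hb. pose proof cfg as [Uc [HUc Hc]]. apply Vu.
  pose proof (Vcc Uc HUc) as bS2.
  pose proof (fc bS2) as b1.
  pose proof (gc (bnd_union hX Hb b1)) as b.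
  apply (bnd_sub b). intros y Vy. simpl.
  destruct (classic (V (f (g y)))) as [H|H]; [left; auto|right].
  destruct (Hc y) as [B [HB [[a [ea Ba]] Bx]]]. subst a.
  split.
  - apply st_intro with (B:=B) (a:=y); auto.
  - apply st_intro with (B:=B) (a:=f (g y)); auto.
Qed.

Lemma transport B : end_candidate LSX opX B -> exists W, end_candidate LSY opY W /\
  bounded LSX (fun x => B x /\ ~ W (f x)) /\ bounded LSY (fun y => W y /\ ~ B (g y)).
Proof.
  intros [Bu [Bo Bcc]].
  pose proof hY as [_ [_ [[U0 [HU0 HU0o]] _]]].
  pose proof (pre_cc hY hX gl gc Bcc) as gcc.
  exists (st (fun y => B (g y)) U0).
  assert (H2 : bounded LSX (fun x => B x /\ ~ st (fun y => B (g y)) U0 (f x))).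
  { pose proof cgf as [Uc [HUc Hc]].
    eapply bnd_sub. apply fc. apply gc. apply (Bcc Uc HUc).
    intros x [Bx nW]. simpl.
    assert (nB : ~ B (g (f x))). { intros H. apply nW. apply (st_sup hY); auto. }
    destruct (Hc x) as [C [HC [[a [ea Ca]] Cx]]]. subst a.
    split.
    - apply st_intro with (B:=C) (a:=x); auto.
    - apply st_intro with (B:=C) (a:=g (f x)); auto. }
  split; [split; [|split]|split].
  - intros Hb. apply Bu. eapply bnd_sub. apply (bnd_union hX (fc Hb) H2).
    intros x Bx. simpl. destruct (classic (st (fun y => B (g y)) U0 (f x))); auto.
  - apply (thick_open hY); auto.
  - apply (thick_cc hY); auto.
  - auto.
  - apply (st_diff hY); auto.
Qed.

Definition phi_fam (E : family X) : family Y := fun V =>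
  end_candidate LSY opY V /\ exists A, E A /\ bounded LSX (fun x => A x /\ ~ V (f x)).

Lemma phi_end E : is_end LSX opX E -> is_end LSY opY (phi_fam E).
Proof.
  intros HE. pose proof HE as [[Hc Hi] Hmax].
  split; [split|].
  - intros V [H _]; auto.
  - intros V1 V2 [[u1 [o1 c1]] [A1 [HA1 b1]]] [[u2 [o2 c2]] [A2 [HA2 b2]]].
    assert (b : bounded LSX (fun x => (A1 x /\ A2 x) /\ ~ (V1 (f x) /\ V2 (f x)))).
    { eapply bnd_sub. apply (bnd_union hX b1 b2).
      intros x [[a1 a2] n]. apply not_and_or in n. destruct n; auto. }
    split; [split; [|split]|].
    + intros Hb. apply (proj1 (Hc _ (Hi _ _ HA1 HA2))).
      eapply bnd_sub. apply (bnd_union hX (fc Hb) b).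
      intros x Ax. simpl. destruct (classic (V1 (f x) /\ V2 (f x))); auto.
    + apply (op_inter hY); auto.
    + apply (cc_inter hY); auto.
    + exists (fun x => A1 x /\ A2 x). split; auto.
  - intros F [Fc Fi] Hsub V FV. split; [apply Fc; auto|].
    pose proof hX as [_ [_ [[U0 [HU0 HU0o]] _]]].
    pose proof (Fc V FV) as [Vu [Vo Vcc]].
    pose proof (pre_cc hX hY fl fc Vcc) as fcc.
    exists (st (fun x => V (f x)) U0). split.
    + apply (end_E1 hX); auto.
      * split; [|split].
        -- intros Hb. apply (unb_pre (Fc V FV)). eapply bnd_sub; eauto.
           intros x Vx. apply (st_sup hX); auto.
        -- apply (thick_open hX); auto.
        -- apply (thick_cc hX); auto.
      * intros B HB Hb.
        assert (Hb' : bounded LSX (fun x => B x /\ V (f x))).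
        { eapply bnd_sub; eauto. intros x [Bx Vx]. split; auto. apply (st_sup hX); auto. }
        clear Hb.
        destruct (transport (Hc B HB)) as [W [HW [bW1 bW2]]].
        assert (PW : phi_fam E W). { split; auto. exists B; auto. }
        pose proof (Fc _ (Fi _ _ (Hsub _ PW) FV)) as [WVu _].
        apply WVu.
        pose proof cfg as [Uc [HUc Hcl]].
        pose proof (fc (Vcc Uc HUc)) as bS2.
        eapply bnd_sub. apply (bnd_union hY bW2 (gc (bnd_union hX Hb' bS2))).
        intros y [Wy Vy]. simpl.
        destruct (classic (B (g y))) as [Bg|Bg]; [right|left; auto].
        destruct (classic (V (f (g y)))) as [H|H]; [left; auto|right].
        destruct (Hcl y) as [D [HD [[a [ea Da]] Dx]]]. subst a.
        split.
        -- apply st_intro with (B:=D) (a:=y); auto.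
        -- apply st_intro with (B:=D) (a:=f (g y)); auto.
    + apply (st_diff hX); auto.
Qed.

Lemma phi_back E : is_end LSX opX E -> forall A, E A ->
  exists V, phi_fam E V /\ bounded LSY (fun y => V y /\ ~ A (g y)).
Proof.
  intros [[Hc Hi] Hmax] A HA.
  destruct (transport (Hc A HA)) as [W [HW [b1 b2]]].
  exists W. split; auto. split; auto. exists A; auto.
Qed.

Definition phi_map (E : Ends LSX opX) : Ends LSY opY :=
  exist _ (phi_fam (proj1_sig E)) (phi_end (proj2_sig E)).

Lemma phi_cont : continuous_wrt (@ends_open X LSX opX) (@ends_open Y LSY opY) phi_map.
Proof.
  intros W HW E HE. destruct (HW _ HE) as [V [Vo [Vcc [PV HV]]]].
  simpl in PV. destruct PV as [Vc [A [HA bA]]].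
  exists A. pose proof (proj2_sig E) as [[Hc _] _].
  destruct (Hc A HA) as [_ [Ao Acc]].
  split; auto. split; auto. split; auto.
  intros E' HE'. apply HV. simpl. split; auto. exists A; auto.
Qed.

End Transport.

Lemma roundtrip (X Y : Type) (LSX : pset (family X)) (opX : pset X -> Prop)
  (LSY : pset (family Y)) (opY : pset Y -> Prop)
  (hX : top_coarse_space LSX opX) (hY : top_coarse_space LSY opY)
  (f : X -> Y) (g : Y -> X)
  (fc : coarse_map LSX LSY f) (fl : ls_continuous LSX LSY f)
  (gc : coarse_map LSY LSX g) (gl : ls_continuous LSY LSX g)
  (cgf : close_maps LSX (fun x => g (f x)) (fun x => x))
  (cfg : close_maps LSY (fun y => f (g y)) (fun y => y))
  (E : family X) (HE : is_end LSX opX E) :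
  phi_fam LSY LSX opX g (phi_fam LSX LSY opY f E) = E.
Proof.
  pose proof (phi_end hX hY fc fl gc gl cgf cfg HE) as HE1.
  pose proof (phi_end hY hX gc gl fc fl cfg cgf HE1) as HE2.
  assert (Hsub : forall A, E A -> phi_fam LSY LSX opX g (phi_fam LSX LSY opY f E) A).
  { intros A HA. destruct (phi_back hX hY fc gc gl cgf HE A HA) as [V [PV bV]].
    split. apply (proj1 (proj1 HE)); auto. exists V; auto. }
  apply functional_extensionality; intro A; apply propositional_extensionality; split.
  - intros H. apply (proj2 HE _ (proj1 HE2) Hsub); auto.
  - apply Hsub.
Qed.

Theorem corollary6p15 (X Y : Type)
  (LSX : pset (family X)) (opX : pset X -> Prop)
  (LSY : pset (family Y)) (opY : pset Y -> Prop)
  (hX : top_coarse_space LSX opX) (hY : top_coarse_space LSY opY)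
  (hXY : coarsely_equivalent LSX LSY) :
  homeomorphic (@ends_open X LSX opX) (@ends_open Y LSY opY).
Proof.
  destruct hXY as [f [g [fc [fl [gc [gl [cgf cfg]]]]]]].
  exists (phi_map hX hY fc fl gc gl cgf cfg), (phi_map hY hX gc gl fc fl cfg cgf).
  split; [|split; [|split]].
  - intros [E HE]. unfold phi_map; simpl. apply subset_eq_compat.
    apply (roundtrip hX hY fc fl gc gl cgf cfg HE).
  - intros [E HE]. unfold phi_map; simpl. apply subset_eq_compat.
    apply (roundtrip hY hX gc gl fc fl cfg cgf HE).
  - apply phi_cont.
  - apply phi_cont.
Qed.
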